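(* Let $\Gamma$ be a cubic distance-regular graph with at least $10$ vertices and let $(u_{ij})$ be the generators of $C(G_{aut}^+(\Gamma))$. Then $u_{ij}u_{kl}=u_{kl}u_{ij}$ for all vertices $i,j,k,l$ with $d(i,k)=d(j,l)\le2$.
   Context: A connected regular graph $\Gamma=(V,E)$ of diameter $D$ is distance-regular with intersection array $\{b_0,\dots,b_{D-1};c_1,\dots,c_D\}$ if for any vertices $v,w$ with $d(v,w)=i$, exactly $b_i$ neighbors of $w$ are at distance $i+1$ from $v$ and exactly $c_i$ neighbors of $w$ are at distance $i-1$ from $v$ ($d$ the graph distance). Cubic means $3$-regular. $C(G_{aut}^+(\Gamma))$ is the universal unital $C^*$-algebra generated by $u_{ij}$, $i,j\in V=\{1,\dots,n\}$, with relations: (R1) $u_{ij}=u_{ij}^*=u_{ij}^2$; (R2) $\sum_{l} u_{il}=1=\sum_{l} u_{li}$ for all $i$; (R3) $u_{ij}u_{kl}=u_{kl}u_{ij}=0$ whenever exactly one of $(i,k)\in E$, $(j,l)\in E$ holds. *)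

(* Defs.v *)
From mathcomp Require Import all_boot.
From Stdlib Require Import Reals.

Set Implicit Arguments.
Unset Strict Implicit.
Unset Printing Implicit Defensive.

Record Cplx := Cpair { Cre : R; Cim : R }.
Definition C0 : Cplx := Cpair 0%R 0%R.
Definition C1 : Cplx := Cpair 1%R 0%R.
Definition Cadd (a b : Cplx) : Cplx := Cpair (Cre a + Cre b)%R (Cim a + Cim b)%R.
Definition Cmul (a b : Cplx) : Cplx :=
  Cpair (Cre a * Cre b - Cim a * Cim b)%R (Cre a * Cim b + Cim a * Cre b)%R.
Definition Cconj (a : Cplx) : Cplx := Cpair (Cre a) (- Cim a)%R.
Definition Cmod (a : Cplx) : R := sqrt (Cre a * Cre a + Cim a * Cim a)%R.

Record CstarAlgebra := {
  ca_car :> Type;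
  ca_zero : ca_car;
  ca_one : ca_car;
  ca_add : ca_car -> ca_car -> ca_car;
  ca_opp : ca_car -> ca_car;
  ca_mul : ca_car -> ca_car -> ca_car;
  ca_scale : Cplx -> ca_car -> ca_car;
  ca_star : ca_car -> ca_car;
  ca_norm : ca_car -> R;
  ca_addA : forall x y z, ca_add x (ca_add y z) = ca_add (ca_add x y) z;
  ca_addC : forall x y, ca_add x y = ca_add y x;
  ca_add0 : forall x, ca_add ca_zero x = x;
  ca_addN : forall x, ca_add (ca_opp x) x = ca_zero;
  ca_scaleA : forall a b x, ca_scale a (ca_scale b x) = ca_scale (Cmul a b) x;
  ca_scale1 : forall x, ca_scale C1 x = x;
  ca_scaleDl : forall a b x, ca_scale (Cadd a b) x = ca_add (ca_scale a x) (ca_scale b x);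
  ca_scaleDr : forall a x y, ca_scale a (ca_add x y) = ca_add (ca_scale a x) (ca_scale a y);
  ca_mulA : forall x y z, ca_mul x (ca_mul y z) = ca_mul (ca_mul x y) z;
  ca_mul1l : forall x, ca_mul ca_one x = x;
  ca_mul1r : forall x, ca_mul x ca_one = x;
  ca_mulDl : forall x y z, ca_mul (ca_add x y) z = ca_add (ca_mul x z) (ca_mul y z);
  ca_mulDr : forall x y z, ca_mul x (ca_add y z) = ca_add (ca_mul x y) (ca_mul x z);
  ca_scale_mull : forall a x y, ca_mul (ca_scale a x) y = ca_scale a (ca_mul x y);
  ca_scale_mulr : forall a x y, ca_mul x (ca_scale a y) = ca_scale a (ca_mul x y);
  ca_starK : forall x, ca_star (ca_star x) = x;
  ca_starD : forall x y, ca_star (ca_add x y) = ca_add (ca_star x) (ca_star y);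
  ca_starM : forall x y, ca_star (ca_mul x y) = ca_mul (ca_star y) (ca_star x);
  ca_starZ : forall a x, ca_star (ca_scale a x) = ca_scale (Cconj a) (ca_star x);
  ca_norm_ge0 : forall x, (0 <= ca_norm x)%R;
  ca_norm_eq0 : forall x, ca_norm x = 0%R -> x = ca_zero;
  ca_norm_triangle : forall x y, (ca_norm (ca_add x y) <= ca_norm x + ca_norm y)%R;
  ca_normZ : forall a x, ca_norm (ca_scale a x) = (Cmod a * ca_norm x)%R;
  ca_normM : forall x y, (ca_norm (ca_mul x y) <= ca_norm x * ca_norm y)%R;
  ca_cstar : forall x, ca_norm (ca_mul (ca_star x) x) = (ca_norm x * ca_norm x)%R;
  ca_complete : forall s : nat -> ca_car,
    (forall eps : R, (0 < eps)%R -> exists N : nat, forall m n : nat,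
        (N <= m)%N -> (N <= n)%N -> (ca_norm (ca_add (s m) (ca_opp (s n))) < eps)%R) ->
    exists x : ca_car, forall eps : R, (0 < eps)%R -> exists N : nat, forall n : nat,
        (N <= n)%N -> (ca_norm (ca_add (s n) (ca_opp x)) < eps)%R
}.

Arguments ca_zero {c}. Arguments ca_one {c}. Arguments ca_add {c}.
Arguments ca_mul {c}. Arguments ca_star {c}.

Section Graph.
Variables (V : finType) (e : rel V).

Fixpoint within (n : nat) (x y : V) : bool :=
  if n is n'.+1 then (x == y) || [exists z, e x z && within n' z y] else x == y.

(* graph distance: least n with a walk of length n from x to y
   (equals #|V| if y is unreachable; irrelevant for connected graphs) *)
Definition gdist (x y : V) : nat := find (fun n => within n x y) (iota 0 #|V|).

Definition simple_graph : Prop := symmetric e /\ irreflexive e.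
Definition gconnected : Prop := forall x y : V, connect e x y.
Definition cubic : Prop := forall v : V, #|[set w | e v w]| = 3.

(* intersection numbers b_i, c_i depend only on i = d(v,w) *)
Definition distance_regular : Prop :=
  gconnected /\
  (exists k : nat, forall v : V, #|[set w | e v w]| = k) /\
  exists b c : nat -> nat, forall v w : V,
    #|[set z | e w z && (gdist v z == (gdist v w).+1)]| = b (gdist v w) /\
    #|[set z | e w z && ((gdist v z).+1 == gdist v w)]| = c (gdist v w).
End Graph.

Definition qaut_relations (V : finType) (e : rel V) (A : CstarAlgebra)
  (u : V -> V -> A) : Prop :=
  (forall i j, u i j = ca_star (u i j) /\ u i j = ca_mul (u i j) (u i j)) /\
  (forall i, \big[ca_add/ca_zero]_(l : V) u i l = ca_one /\
             \big[ca_add/ca_zero]_(l : V) u l i = ca_one) /\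
  (forall i j k l, e i k != e j l ->
     ca_mul (u i j) (u k l) = ca_zero /\ ca_mul (u k l) (u i j) = ca_zero).

(* Main.v *)
From HB Require Import structures.
Require Import Defs.
From Stdlib Require Import Reals.
From mathcomp Require Import all_boot.
Set Implicit Arguments. Unset Strict Implicit. Unset Printing Implicit Defensive.

Local Notation "x \* y" := (ca_mul x y) (at level 40, left associativity).
Local Notation "x \+ y" := (ca_add x y) (at level 50, left associativity).

Section Alg.
Variable A : CstarAlgebra.
Local Notation z0 := (@ca_zero A).
Local Notation o1 := (@ca_one A).

Lemma ca_addr0 (x : A) : x \+ z0 = x.
Proof. by rewrite ca_addC ca_add0. Qed.

Lemma ca_cancel (x y z : A) : x \+ y = x \+ z -> y = z.
Proof.
move=> H. have := f_equal (ca_add (ca_opp x)) H.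
by rewrite !ca_addA ca_addN !ca_add0.
Qed.

Lemma ca_mulr0 (x : A) : x \* z0 = z0.
Proof.
apply: (@ca_cancel (x \* z0)); rewrite ca_addr0 -ca_mulDr.
by rewrite ca_add0.
Qed.

Lemma ca_mul0r (x : A) : z0 \* x = z0.
Proof.
apply: (@ca_cancel (z0 \* x)); rewrite ca_addr0 -ca_mulDl.
by rewrite ca_add0.
Qed.

Lemma ca_double0 (x : A) : x \+ x = z0 -> x = z0.
Proof.
move=> H.
have h2 : Cmul (Cpair (Rinv (Rplus R1 R1)) R0) (Cadd Defs.C1 Defs.C1) = Defs.C1.
  rewrite /Cmul /Cadd /Defs.C1 /=; f_equal; field.
have hs0 : forall a, ca_scale a z0 = z0.
  move=> a; apply: (@ca_cancel (ca_scale a z0)).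
  by rewrite ca_addr0 -ca_scaleDr ca_add0.
rewrite -(ca_scale1 x) -h2 -ca_scaleA ca_scaleDl ca_scale1 H.
by rewrite hs0.
Qed.

HB.instance Definition _ := Monoid.isComLaw.Build (ca_car A) z0 (@ca_add A)
  (@ca_addA A) (@ca_addC A) (@ca_add0 A).

Lemma ca_sum_mulr (x : A) I (r : seq I) (P : pred I) (F : I -> A) :
  x \* (\big[ca_add/z0]_(i <- r | P i) F i) = \big[ca_add/z0]_(i <- r | P i) (x \* F i).
Proof.
apply: (big_endo (fun y => x \* y)); first by move=> a b; rewrite ca_mulDr.
exact: ca_mulr0.
Qed.

Lemma ca_sum_mull (x : A) I (r : seq I) (P : pred I) (F : I -> A) :
  (\big[ca_add/z0]_(i <- r | P i) F i) \* x = \big[ca_add/z0]_(i <- r | P i) (F i \* x).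
Proof.
apply: (big_endo (fun y => y \* x)); first by move=> a b; rewrite ca_mulDl.
exact: ca_mul0r.
Qed.

End Alg.


Section Cub.
Variables (V : finType) (e : rel V).
Hypothesis esym : symmetric e.
Hypothesis ecub : forall v, #|[set w | e v w]| = 3.

Lemma nbr_ex x : exists y, e x y.
Proof.
have : 0 < #|[set w | e x w]| by rewrite ecub.
by case/card_gt0P=> y; rewrite inE; exists y.
Qed.

Lemma nbr_third x a b : e x a -> e x b -> a != b ->
  exists c, [/\ e x c, c != a & c != b].
Proof.
move=> ea eb ab.
have : 0 < #|[set w | e x w] :\: [set a; b]|.
  rewrite cardsD ecub.
  have -> : [set w | e x w] :&: [set a; b] = [set a; b].
    by apply/setIidPr/subsetP=> w; rewrite !inE => /orP[]/eqP->.
  by rewrite cards2 ab.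
case/card_gt0P=> c; rewrite !inE negb_or => /andP[/andP[ca cb] ec].
by exists c.
Qed.

Lemma nbr3 x a b c : e x a -> e x b -> e x c -> a != b -> a != c -> b != c ->
  forall z, e x z -> (z == a) || (z == b) || (z == c).
Proof.
move=> ea eb ec ab ac bc z ez.
have sub : [set a; b; c] \subset [set w | e x w].
  by apply/subsetP=> w; rewrite !inE => /orP[/orP[]|]/eqP->.
have card3 : #|[set a; b; c]| = 3.
  have -> : [set a; b; c] = c |: [set a; b].
    by apply/setP=> w; rewrite !inE orbC.
  by rewrite cardsU1 cards2 !inE negb_or ab eq_sym ac eq_sym bc.
have := (subset_cardP _ sub); rewrite card3 ecub => /(_ erefl) /(_ z).
by rewrite !inE ez => ->.
Qed.

End Cub.


Section Q.
Variables (V : finType) (e : rel V).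
Hypothesis esym : symmetric e.
Hypothesis eirr : irreflexive e.
Hypothesis ecub : forall v, #|[set w | e v w]| = 3.
Hypothesis eU : forall x y z z', x != y -> e x z -> e y z -> e x z' -> e y z' -> z = z'.
Variable A : CstarAlgebra.
Variable u : V -> V -> A.
Hypothesis uR : qaut_relations e u.

Local Notation z0 := (@ca_zero A).
Local Notation o1 := (@ca_one A).

Lemma zz i j k l : e i k != e j l -> u i j \* u k l = z0.
Proof. by case: uR => _ [_ H] /H []. Qed.

Lemma row_sum i : \big[ca_add/z0]_(l : V) u i l = o1.
Proof. by case: uR => _ [H _]; case: (H i). Qed.

Lemma col_sum i : \big[ca_add/z0]_(l : V) u l i = o1.
Proof. by case: uR => _ [H _]; case: (H i). Qed.

Lemma ins_row k (x y : A) : x \* y = \big[ca_add/z0]_(b : V) (x \* u k b \* y).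
Proof.
have -> : x \* y = x \* o1 \* y by rewrite ca_mul1r.
by rewrite -(row_sum k) ca_sum_mulr ca_sum_mull.
Qed.

Lemma ins_col k (x y : A) : x \* y = \big[ca_add/z0]_(b : V) (x \* u b k \* y).
Proof.
have -> : x \* y = x \* o1 \* y by rewrite ca_mul1r.
by rewrite -(col_sum k) ca_sum_mulr ca_sum_mull.
Qed.

Lemma sum1 m (F : V -> A) : (forall b, b != m -> F b = z0) ->
  \big[ca_add/z0]_(b : V) F b = F m.
Proof. by move=> H; rewrite (bigD1 m) //= big1 ?ca_addr0 // => b /H. Qed.

Lemma sum3 x y z (F : V -> A) : x != y -> x != z -> y != z ->
  (forall b, b != x -> b != y -> b != z -> F b = z0) ->
  \big[ca_add/z0]_(b : V) F b = F x \+ (F y \+ F z).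
Proof.
move=> xy xz yz H; rewrite (bigD1 x) //= (bigD1 y) 1?eq_sym //= (bigD1 z) /=; last first.
  by rewrite eq_sym xz eq_sym yz.
rewrite big1 ?ca_addr0 // => b /andP[/andP[bx by'] bz]; exact: H.
Qed.

Lemma sum_restr (S : {set V}) (F : V -> A) : (forall b, b \notin S -> F b = z0) ->
  \big[ca_add/z0]_(b : V) F b = \big[ca_add/z0]_(b in S) F b.
Proof.
move=> H; rewrite [RHS]big_mkcond /=; apply: eq_bigr => b _.
by case: ifP => // /negbT /H.
Qed.

Lemma u_proj i j : u i j \* u i j = u i j.
Proof. by case: uR => [H _]; case: (H i j). Qed.

Lemma u_star i j : ca_star (u i j) = u i j.
Proof. by case: uR => [H _]; case: (H i j). Qed.



Lemma zr i j k l (x : A) : e i k != e j l -> x \* u i j \* u k l = z0.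
Proof. by move=> H; rewrite -ca_mulA zz // ca_mulr0. Qed.

Lemma orth_row i j l : j != l -> u i j \* u i l = z0.
Proof.
move=> jl; case ejl: (e j l); first by apply: zz; rewrite eirr ejl.
case: (pickP (fun m => e j m && e m l)) => [m /andP[ejm eml] | none]; last first.
  have [k eik] := nbr_ex ecub i.
  rewrite (ins_row k); apply: big1 => b _.
  case ejb: (e j b); last by rewrite zz ?ca_mul0r // eik ejb.
  case ebl: (e b l); last by rewrite zr // esym eik ebl.
  by have := none b; rewrite ejb ebl.
set x := u i j \* u i l.
have key : forall k, e i k -> x = u i j \* u k m \* u i l.
  move=> k eik; rewrite /x (ins_row k); apply: sum1 => b bm.
  case ejb: (e j b); last by rewrite zz ?ca_mul0r // eik ejb.
  case ebl: (e b l); last by rewrite zr // esym eik ebl.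
  have ebl' : e l b by rewrite esym.
  have eml' : e l m by rewrite esym.
  by rewrite (eU jl ejb ebl' ejm eml') eqxx in bm.
have hij : u i j = \big[ca_add/z0]_(k in [set w | e i w]) (u i j \* u k m).
  rewrite -sum_restr; last first.
    by move=> b; rewrite inE => /negbTE eb; rewrite zz // eb ejm.
  by rewrite -ca_sum_mulr col_sum ca_mul1r.
have : x = x \+ (x \+ (x \+ z0)).
  rewrite {1}/x {1}hij ca_sum_mull.
  rewrite (eq_bigr (fun _ => x)); last by move=> k; rewrite inE => /key <-.
  by rewrite big_const ecub.
rewrite ca_addr0 -{1}[x]ca_addr0 => /ca_cancel H; apply: ca_double0; by rewrite -H.
Qed.

End Q.

Lemma qaut_transpose (V : finType) (e : rel V) (A : CstarAlgebra) (u : V -> V -> A) :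
  qaut_relations e u -> qaut_relations e (fun i j => u j i).
Proof.
case=> [H1 [H2 H3]]; split; first by move=> i j; exact: H1.
split; first by move=> i; case: (H2 i) => a b; split.
move=> i j k l H; apply: H3; by rewrite eq_sym.
Qed.


Lemma star_trick (A : CstarAlgebra) (a b : A) : ca_star a = a -> ca_star b = b ->
  a \* b = a \* b \* a -> a \* b = b \* a.
Proof.
move=> sa sb H.
have E : b \* a = ca_star (a \* b) by rewrite ca_starM sa sb.
rewrite E H !ca_starM sa sb ca_mulA -H.
done.
Qed.

Lemma swapL (A : CstarAlgebra) (x b c : A) : b \* c = c \* b -> x \* b \* c = x \* c \* b.
Proof. by move=> H; rewrite -!ca_mulA H. Qed.

Lemma zeroL (A : CstarAlgebra) (x b c : A) : b \* c = ca_zero -> x \* b \* c = ca_zero.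
Proof. by move=> H; rewrite -!ca_mulA H ca_mulr0. Qed.

Lemma idemL (A : CstarAlgebra) (x b : A) : b \* b = b -> x \* b \* b = x \* b.
Proof. by move=> H; rewrite -!ca_mulA H. Qed.

Section Q.
Variables (V : finType) (e : rel V).
Hypothesis esym : symmetric e.
Hypothesis eirr : irreflexive e.
Hypothesis ecub : forall v, #|[set w | e v w]| = 3.
Hypothesis eU : forall x y z z', x != y -> e x z -> e y z -> e x z' -> e y z' -> z = z'.
Variable A : CstarAlgebra.
Variable u : V -> V -> A.
Hypothesis uR : qaut_relations e u.

Local Notation z0 := (@ca_zero A).
Local Notation o1 := (@ca_one A).

Lemma orth_col i j k : i != k -> u i j \* u k j = z0.
Proof.
move=> ik; have H := orth_row esym eirr ecub eU (qaut_transpose uR).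
exact: (H j i k ik).
Qed.

Let zz := zz uR.
Let zr := zr uR.

Lemma adj_comm i j k l : e i k -> e j l -> u i j \* u k l = u k l \* u i j.
Proof.
move=> eik ejl; apply: star_trick; try exact: u_star uR _ _.
rewrite -{1}[u i j \* u k l]ca_mul1r -(row_sum uR i) ca_sum_mulr (sum1 (m:=j)) // => a aj.
case ela: (e l a); last by rewrite zr // esym eik ela.
have ja : j != a by rewrite eq_sym.
have := orth_row esym eirr ecub eU uR i ja.
rewrite (ins_row uR k) (sum1 (m:=l)) // => b bl.
case ejb: (e j b); last by rewrite zz ?ca_mul0r // eik ejb.
case eba: (e b a); last by rewrite zr // esym eik eba.
have eal : e a l by rewrite esym.
have eab : e a b by rewrite esym.
by rewrite (eU ja ejb eab ejl eal) eqxx in bl.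
Qed.


Lemma dist2_comm i j k l p q : i != k -> e i p -> e p k -> j != l -> e j q -> e q l ->
  u i j \* u k l = u k l \* u i j.
Proof.
move=> ik eip epk jl ejq eql.
have ekp : e k p by rewrite esym.
have elq : e l q by rewrite esym.
have epi : e p i by rewrite esym.
have eqj : e q j by rewrite esym.
set P := u p q; set X := u i j; set B := u k l.
have hAP : X \* P = P \* X := adj_comm eip ejq.
have hBP : B \* P = P \* B := adj_comm ekp elq.
have PP : P \* P = P := u_proj uR p q.
have hAB : X \* B = X \* P \* B.
  rewrite (ins_row uR p) (sum1 (m:=q)) // => s sq.
  case ejs: (e j s); last by rewrite zz ?ca_mul0r // eip ejs.
  case esl: (e s l); last by rewrite zr // epk esl.
  have els : e l s by rewrite esym.
  by rewrite (eU jl ejs els ejq elq) eqxx in sq.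
have [r [epr ri rk]] := nbr_third ecub epi epk ik.
have [a [eqa aj al]] := nbr_third ecub eqj eql jl.
have eaq : e a q by rewrite esym.
have ir : i != r by rewrite eq_sym.
have kr : k != r by rewrite eq_sym.
have ja : j != a by rewrite eq_sym.
have la : l != a by rewrite eq_sym.
have erp : e r p by rewrite esym.
set C := u i a.
have hCP : C \* P = P \* C := adj_comm eip eaq.
have hABP : X \* B = X \* B \* P by rewrite {1}hAB -ca_mulA -hBP ca_mulA.
have NP : forall x, x != i -> x != k -> x != r -> ~~ e p x.
  move=> x xi xk xr; apply/negP => epx.
  by move: (nbr3 ecub epi epk epr ik ir kr epx); rewrite (negbTE xi) (negbTE xk) (negbTE xr).
have NQ : forall x, x != j -> x != l -> x != a -> ~~ e q x.
  move=> x xi xk xr; apply/negP => epx.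
  by move: (nbr3 ecub eqj eql eqa jl ja la epx); rewrite (negbTE xi) (negbTE xk) (negbTE xr).
set T := X \* B \* C \* P.
set W := X \* P \* u r l \* C \* P.
have XPCP0 : X \* P \* C \* P = z0.
  rewrite (swapL X (Logic.eq_sym hCP)).
  have XC : X \* C = z0 by apply: (orth_row esym eirr ecub eU uR); rewrite eq_sym.
  by rewrite XC !ca_mul0r.
have S1 : X \* P \* C \* P = T \+ W.
  rewrite -ca_mulA (ins_col uR l) (sum3 (x:=i) (y:=k) (z:=r)) //; last first.
    move=> x xi xk xr; rewrite zr ?ca_mul0r //.
    by rewrite (negbTE (NP x xi xk xr)) eql.
  rewrite !ca_mulA.
  have t_i : X \* P \* u i l \* C \* P = z0.
    rewrite hAP (zeroL P (orth_row esym eirr ecub eU uR i jl)).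
    by rewrite !ca_mul0r.
  have t_k : X \* P \* B \* C \* P = T.
    rewrite (swapL X (Logic.eq_sym hBP)) (swapL (X \* B) (Logic.eq_sym hCP)).
    by rewrite idemL.
  by rewrite t_i t_k ca_add0.
have S2 : X \* P \* C \* P = W.
  rewrite -ca_mulA (ins_row uR r) (sum3 (x:=j) (y:=l) (z:=a)) //; last first.
    move=> x xi xk xr; rewrite zr ?ca_mul0r //.
    by rewrite (negbTE (NQ x xi xk xr)) epr.
  rewrite !ca_mulA.
  have t_j : X \* P \* u r j \* C \* P = z0.
    rewrite hAP (zeroL P (orth_col j ir)).
    by rewrite !ca_mul0r.
  have t_a : X \* P \* u r a \* C \* P = z0.
    by rewrite (zeroL (X \* P) (orth_col a ri)) !ca_mul0r.
  by rewrite t_j t_a ca_add0 ca_addr0.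
have T0 : T = z0.
  have H : W \+ T = W \+ z0 by rewrite ca_addr0 ca_addC -S1 S2.
  by have := ca_cancel H.
apply: star_trick; try exact: u_star uR _ _.
rewrite {1}hABP -{1}[X \* B \* P]ca_mul1r -(row_sum uR i) ca_sum_mulr.
rewrite (sum3 (x:=j) (y:=l) (z:=a)) //=; last first.
  move=> x xi xk xr; rewrite zr //.
  by rewrite (negbTE (NQ x xi xk xr)) epi.
have ki : k != i by rewrite eq_sym.
rewrite -hABP (zeroL X (orth_col l ki)).
have t3 : X \* B \* C = z0.
  by rewrite {1}hABP (swapL (X \* B) (Logic.eq_sym hCP)) -/T T0.
by rewrite -/C t3 ca_add0 ca_addr0.
Qed.

End Q.

Section Dist.
Variables (V : finType) (e : rel V).
Hypothesis eirr : irreflexive e.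

Lemma within_mono n x y : within e n x y -> within e n.+1 x y.
Proof.
elim: n x => [|n IH] x /=; first by move=> ->.
case/orP=> [->//| /existsP [z /andP[exz wz]]].
apply/orP; right; apply/existsP; exists z; apply/andP; split => //; exact: IH.
Qed.

Lemma within_le n m x y : n <= m -> within e n x y -> within e m x y.
Proof.
move=> /subnK <-; elim: (m - n) => [|d IH] w; first by [].
rewrite addSn; exact: within_mono (IH w).
Qed.

Lemma gdist_le m x y : m < #|V| -> (gdist e x y <= m) = within e m x y.
Proof.
move=> mV; rewrite /gdist; apply/idP/idP => [le | w].
  have hf : find (fun n => within e n x y) (iota 0 #|V|) < #|V|.
    exact: leq_ltn_trans le mV.
  have hh : has (fun n => within e n x y) (iota 0 #|V|) by rewrite has_find size_iota.
  have := nth_find 0 hh; rewrite nth_iota // add0n; exact: within_le.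
rewrite leqNgt; apply/negP => lt.
have := before_find 0 lt; rewrite nth_iota // add0n w //.
Qed.

Lemma ex_eq x y : [exists z, e x z && (z == y)] = e x y.
Proof.
apply/existsP/idP => [[z /andP[h /eqP<-]] //| h].
by exists y; rewrite h eqxx.
Qed.

Lemma gdist_eqS m x y : m.+1 < #|V| ->
  (gdist e x y == m.+1) = within e m.+1 x y && ~~ within e m x y.
Proof.
move=> mV; rewrite -gdist_le // -gdist_le ?(ltnW mV) //.
by rewrite eqn_leq -ltnNge.
Qed.

Hypothesis V3 : 2 < #|V|.

Lemma gd0 x y : gdist e x y = 0 -> x = y.
Proof.
move=> h; have : gdist e x y <= 0 by rewrite h.
by rewrite gdist_le ?(ltn_trans _ V3) //= => /eqP.
Qed.

Lemma gd1 x y : (gdist e x y == 1) = e x y.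
Proof.
rewrite gdist_eqS ?(ltn_trans _ V3) //= ex_eq.
case: eqP => [->|_] /=; first by rewrite eirr.
by rewrite andbT.
Qed.

Lemma gd2 x y : (gdist e x y == 2) =
  [&& x != y, ~~ e x y & [exists z, e x z && e z y]].
Proof.
rewrite gdist_eqS //= ex_eq.
case: eqP => [->|_] //=; case exy: (e x y); rewrite /= ?andbF ?andbT //.
apply/existsP/existsP => [[z /andP[exz /orP[/eqP zy|]]]|[z /andP[exz ezy]]].
- by rewrite -zy exz in exy.
- rewrite ex_eq => ezy; by exists z; rewrite exz.
- by exists z; rewrite exz ex_eq ezy orbT.
Qed.

End Dist.

Section G.
Variables (V : finType) (e : rel V).
Hypothesis esym : symmetric e.
Hypothesis eirr : irreflexive e.
Hypothesis ecub : forall v, #|[set w | e v w]| = 3.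
Hypothesis conn : gconnected e.
Hypothesis n10 : 10 <= #|V|.
Variables bn cn : nat -> nat.
Hypothesis hbc : forall v w : V,
    #|[set z | e w z && (gdist e v z == (gdist e v w).+1)]| = bn (gdist e v w) /\
    #|[set z | e w z && ((gdist e v z).+1 == gdist e v w)]| = cn (gdist e v w).

Let V3 : 2 < #|V|. Proof. exact: leq_trans n10. Qed.

Lemma adj_neq x y : e x y -> x != y.
Proof. by apply: contraTneq => ->; rewrite eirr. Qed.

Lemma closure (s : seq V) v : v \in s ->
  (forall a z, a \in s -> e a z -> z \in s) -> #|V| <= size s.
Proof.
move=> vs cl.
have all_in : forall w, w \in s.
  move=> w; have /connectP [p pth ->] := conn v w.
  elim: p v vs pth => //= a p IH v vs /andP[eva pth]; exact: IH (cl _ _ vs eva) pth.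
apply: leq_trans (card_size s); apply: subset_leq_card; apply/subsetP => w _; exact: all_in.
Qed.

Definition OUT v w := [set z | e w z && (z != v) && ~~ e v z].
Definition CN v w := [set z | e w z && e v z].

Lemma out_card v w : e v w -> #|OUT v w| = bn 1.
Proof.
move=> evw; have [h _] := hbc v w.
move: h; rewrite (eqP (_ : gdist e v w == 1)) ?gd1 // => <-.
apply: eq_card => z; rewrite !inE gd2 //.
case ewz: (e w z) => //=.
have -> : [exists t, e v t && e t z] by apply/existsP; exists w; rewrite evw ewz.
by rewrite andbT eq_sym.
Qed.

Lemma cn_card v w p : v != w -> ~~ e v w -> e v p -> e p w -> #|CN v w| = cn 2.
Proof.
move=> vw nvw evp epw; have [_ h] := hbc v w.
have g2 : gdist e v w = 2.
  apply/eqP; rewrite gd2 // vw nvw /=; apply/existsP; exists p; by rewrite evp.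
move: h; rewrite g2 => <-.
by apply: eq_card => z; rewrite !inE eqSS gd1.
Qed.


Lemma closure_all (s : seq V) v : v \in s ->
  all (fun a => [forall z, e a z ==> (z \in s)]) s -> #|V| <= size s.
Proof.
move=> vs H; apply: (closure vs) => a z /(allP H) /forallP /(_ z) /implyP; apply.
Qed.

Lemma nbr_in a p q r (s : seq V) : e a p -> e a q -> e a r ->
  p != q -> p != r -> q != r -> p \in s -> q \in s -> r \in s ->
  [forall z, e a z ==> (z \in s)].
Proof.
move=> ep eq er pq pr qr ps qs rs; apply/forallP => z; apply/implyP => ez.
by have := nbr3 ecub ep eq er pq pr qr ez; case/orP => [/orP[]|] /eqP->.
Qed.

Lemma out_ge v w t : e w t -> t != v -> ~~ e v t -> 0 < #|OUT v w|.
Proof. by move=> ewt tv nvt; apply/card_gt0P; exists t; rewrite !inE ewt tv nvt. Qed.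

Lemma out_ge2 v w t s : e w t -> e w s -> t != v -> s != v -> t != s ->
  ~~ e v t -> ~~ e v s -> 1 < #|OUT v w|.
Proof.
move=> ewt ews tv sv ts nvt nvs; apply/card_gt1P; exists t, s.
by rewrite !inE ewt ews tv sv nvt nvs ts.
Qed.

Lemma out_le v w s t : e w v -> e w s -> e w t -> v != s -> v != t -> s != t ->
  e v s -> #|OUT v w| <= 1.
Proof.
move=> ewv ews ewt vs vt st evs.
rewrite -(cards1 t); apply: subset_leq_card; apply/subsetP => z.
rewrite !inE => /andP[/andP[ewz zv] nvz].
have := nbr3 ecub ewv ews ewt vs vt st ewz.
rewrite (negbTE zv) /=; case/orP => // /eqP zs.
by rewrite zs evs in nvz.
Qed.

Lemma out_0 v w s t : e w v -> e w s -> e w t -> v != s -> v != t -> s != t ->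
  e v s -> e v t -> #|OUT v w| = 0.
Proof.
move=> ewv ews ewt vs vt st evs evt.
apply/eqP; rewrite cards_eq0; apply/eqP/setP => z.
rewrite !inE; apply/negP => /andP[/andP[ewz zv] nvz].
have := nbr3 ecub ewv ews ewt vs vt st ewz.
by rewrite (negbTE zv) /=; case/orP => /eqP zs; rewrite zs ?evs ?evt in nvz.
Qed.

Ltac mem := by rewrite !inE eqxx ?orbT.

Lemma notri x y z : e x y -> e y z -> e x z -> False.
Proof.
move=> exy eyz exz.
have yz := adj_neq eyz; have xy := adj_neq exy; have xz := adj_neq exz.
have [t [ext ty tz]] := nbr_third ecub exy exz yz.
have xt := adj_neq ext.
have eyx : e y x by rewrite esym.
have ezx : e z x by rewrite esym.
have ezy : e z y by rewrite esym.
have etx : e t x by rewrite esym.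
have ex1 := out_card eyx.
have ex2 := out_card ezx.
have ex3 := out_card etx.
have yt : y != t by rewrite eq_sym.
have zt : z != t by rewrite eq_sym.
case eyt: (e y t); case ezt: (e z t).
- have ety : e t y by rewrite esym.
  have etz : e t z by rewrite esym.
  have : #|V| <= size [:: x; y; z; t].
    apply: (closure_all (v:=x)); first mem.
    rewrite /= !andbT; apply/and4P; split.
    + apply: (nbr_in exy exz ext yz yt zt); mem.
    + apply: (nbr_in eyx eyz eyt xz xt zt); mem.
    + apply: (nbr_in ezx ezy ezt xy xt yt); mem.
    + apply: (nbr_in etx ety etz xy xz yz); mem.
  by move=> /(leq_trans n10).
- have h0 := out_0 exy exz ext yz yt zt eyz eyt.
  have h1 := out_ge (v:=z) ext tz (negbT ezt).
  by move: h1; rewrite ex2 -ex1 h0.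
- have zy : z != y by rewrite eq_sym.
  have h0 := out_0 exz exy ext zy zt yt ezy ezt.
  have h1 := out_ge (v:=y) ext ty (negbT eyt).
  by move: h1; rewrite ex1 -ex2 h0.
- have h0 := out_le exy exz ext yz yt zt eyz.
  have nty : ~~ e t y by rewrite esym eyt.
  have ntz : ~~ e t z by rewrite esym ezt.
  have h1 := out_ge2 exy exz yt zt yz nty ntz.
  by move: h1; rewrite ex3 -ex1 ltnNge h0.
Qed.

Lemma nbr_other x a : e x a -> exists y, e x y /\ y != a.
Proof.
move=> exa; have : 0 < #|[set w | e x w] :\ a|.
  by move: (cardsD1 a [set w | e x w]); rewrite ecub inE exa add1n => -[<-].
by case/card_gt0P => y; rewrite !inE => /andP[ya exy]; exists y.
Qed.

Lemma second_cn a b v : a != b -> ~~ e a b -> e a v -> e v b -> 1 < cn 2 ->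
  exists y, [/\ y != v, e a y & e b y].
Proof.
move=> ab nab eav evb; rewrite -(cn_card ab nab eav evb).
case/card_gt1P => y1 [y2 [] ]; rewrite !inE => /andP[eb1 ea1] /andP[eb2 ea2] y12.
case: (eqVneq y1 v) => [y1v|y1v]; last by exists y1.
exists y2; split => //; by rewrite -y1v eq_sym.
Qed.

Lemma nadj2 v a y : e v a -> e a y -> ~~ e v y.
Proof. move=> eva eay; apply/negP => evy; exact: notri eva eay evy. Qed.

Lemma card3 (a b d : V) : a != b -> a != d -> b != d -> #|[set a; b; d]| = 3.
Proof.
move=> ab ad bd.
have -> : [set a; b; d] = d |: [set a; b] by apply/setP=> w; rewrite !inE orbC.
by rewrite cardsU1 cards2 !inE negb_or ab eq_sym ad eq_sym bd.
Qed.

Ltac sy := by rewrite esym.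
Ltac nsy := by rewrite eq_sym.

Lemma cube_case v a b d : e v a -> e v b -> e v d -> a != b -> a != d -> b != d ->
  cn 2 = 2 -> False.
Proof.
move=> eva evb evd ab ad bd c22.
have c2g : 1 < cn 2 by rewrite c22.
have eav : e a v by sy. have ebv : e b v by sy. have edv : e d v by sy.
have nab : ~~ e a b by apply: nadj2 eav evb.
have nad : ~~ e a d by apply: nadj2 eav evd.
have nbd : ~~ e b d by apply: nadj2 ebv evd.
have [yab [yabv eay1 eby1]] := second_cn ab nab eav evb c2g.
have [yac [yacv eay2 edy2]] := second_cn ad nad eav evd c2g.
have [ybc [ybcv eby3 edy3]] := second_cn bd nbd ebv evd c2g.
have K : forall y, y != v -> e y a -> e y b -> e y d -> False.
  move=> y yv eya eyb eyd.
  have vy : v != y by nsy.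
  have eay : e a y by sy.
  have := cn_card vy (nadj2 eva eay) eva eay; rewrite c22 => h.
  have : #|[set a; b; d]| <= #|CN v y|.
    apply: subset_leq_card; apply/subsetP => z; rewrite !inE.
    by case/orP => [/orP[]|] /eqP ->; rewrite ?eya ?eyb ?eyd ?eva ?evb ?evd.
  by rewrite h card3.
have y12 : yab != yac.
  by apply/eqP => E; apply: (K yab yabv); rewrite esym //; rewrite E //.
have y13 : yab != ybc.
  by apply/eqP => E; apply: (K yab yabv); rewrite esym //; rewrite E //.
have y23 : yac != ybc.
  by apply/eqP => E; apply: (K yac yacv); rewrite esym //; rewrite E //.
have vy1 : v != yab by nsy. have vy2 : v != yac by nsy. have vy3 : v != ybc by nsy.
have y1a : yab != a by apply/eqP => E; rewrite E eirr in eay1.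
have y1b : yab != b by apply/eqP => E; rewrite E eirr in eby1.
have y2a : yac != a by apply/eqP => E; rewrite E eirr in eay2.
have y2d : yac != d by apply/eqP => E; rewrite E eirr in edy2.
have y3b : ybc != b by apply/eqP => E; rewrite E eirr in eby3.
have y3d : ybc != d by apply/eqP => E; rewrite E eirr in edy3.
have Na := nbr3 ecub eav eay1 eay2 vy1 vy2 y12.
have Nb := nbr3 ecub ebv eby1 eby3 vy1 vy3 y13.
have Nd := nbr3 ecub edv edy2 edy3 vy2 vy3 y23.
have ey1a : e yab a by sy. have ey2a : e yac a by sy.
have ey1b : e yab b by sy. have ey3b : e ybc b by sy.
have ey2d : e yac d by sy. have ey3d : e ybc d by sy.
have ny12 : ~~ e yab yac by apply: nadj2 ey1a eay2.
have ny13 : ~~ e yab ybc by apply: nadj2 ey1b eby3.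
have [w [wa ey1w ey2w]] := second_cn y12 ny12 ey1a eay2 c2g.
have [w' [w'b ey1w' ey3w']] := second_cn y13 ny13 ey1b eby3 c2g.
have wb : w != b.
  apply/eqP => E; move: (Nb yac); rewrite -E esym ey2w /= => /(_ isT).
  by rewrite (negbTE yacv) eq_sym (negbTE y12) (negbTE y23).
have wd : w != d.
  apply/eqP => E; move: (Nd yab); rewrite -E esym ey1w /= => /(_ isT).
  by rewrite (negbTE yabv) (negbTE y12) (negbTE y13).
have w'a : w' != a.
  apply/eqP => E; move: (Na ybc); rewrite -E esym ey3w' /= => /(_ isT).
  by rewrite (negbTE ybcv) eq_sym (negbTE y13) eq_sym (negbTE y23).
have aw : a != w by nsy.
have bw : b != w by nsy.
have dw : d != w by nsy.
have Ny1 := nbr3 ecub ey1a ey1b ey1w ab aw bw.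
have w'w : w' = w.
  move: (Ny1 w' ey1w'); rewrite (negbTE w'a) (negbTE w'b) /=; by move/eqP.
rewrite w'w in ey3w'.
have ewy1 : e w yab by sy. have ewy2 : e w yac by sy. have ewy3 : e w ybc by sy.
have : #|V| <= size [:: v; a; b; d; yab; yac; ybc; w].
  apply: (closure_all (v:=v)); first mem.
  rewrite /= !andbT; apply/and4P; split; [| | |apply/and4P; split].
  - apply: (nbr_in eva evb evd ab ad bd); mem.
  - apply: (nbr_in eav eay1 eay2 vy1 vy2 y12); mem.
  - apply: (nbr_in ebv eby1 eby3 vy1 vy3 y13); mem.
  - apply: (nbr_in edv edy2 edy3 vy2 vy3 y23); mem.
  - apply: (nbr_in ey1a ey1b ey1w ab aw bw); mem.
  - apply: (nbr_in ey2a ey2d ey2w ad aw dw); mem.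
  - apply/andP; split.
      apply: (nbr_in ey3b ey3d ey3w' bd bw dw); mem.
    apply: (nbr_in ewy1 ewy2 ewy3 y12 y13 y23); mem.
by move=> /(leq_trans n10).
Qed.

Lemma k33_case v a b d : e v a -> e v b -> e v d -> a != b -> a != d -> b != d ->
  cn 2 = 3 -> False.
Proof.
move=> eva evb evd ab ad bd c23.
have eav : e a v by sy. have ebv : e b v by sy. have edv : e d v by sy.
have KK : forall y, y != v -> e a y -> [&& e y a, e y b & e y d].
  move=> y yv eay; have vy : v != y by nsy.
  have := cn_card vy (nadj2 eva eay) eva eay; rewrite c23 => h.
  have sub : CN v y \subset [set w | e v w].
    by apply/subsetP => z; rewrite !inE => /andP[].
  have eqs := subset_cardP (etrans h (Logic.eq_sym (ecub v))) sub.
  have P z : e v z -> e y z.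
    by move=> evz; move: (eqs z); rewrite !inE evz => /andP[].
  by rewrite P // P // P.
have [y [eay yv]] := nbr_other eav.
have vy : v != y by nsy.
have [y' [eay' y'v y'y]] := nbr_third ecub eav eay vy.
have vy' : v != y' by nsy.
have yy' : y != y' by nsy.
have /and3P [eya eyb eyd] := KK y yv eay.
have /and3P [ey'a ey'b ey'd] := KK y' y'v eay'.
have eby : e b y by sy. have eby' : e b y' by sy.
have edy : e d y by sy. have edy' : e d y' by sy.
have : #|V| <= size [:: v; a; b; d; y; y'].
  apply: (closure_all (v:=v)); first mem.
  rewrite /= !andbT; apply/and4P; split; [| | |apply/and3P; split].
  - apply: (nbr_in eva evb evd ab ad bd); mem.
  - apply: (nbr_in eav eay eay' vy vy' yy'); mem.
  - apply: (nbr_in ebv eby eby' vy vy' yy'); mem.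
  - apply: (nbr_in edv edy edy' vy vy' yy'); mem.
  - apply: (nbr_in eya eyb eyd ab ad bd); mem.
  - apply: (nbr_in ey'a ey'b ey'd ab ad bd); mem.
by move=> /(leq_trans n10).
Qed.

Lemma uniq_cn x y z z' : x != y -> e x z -> e y z -> e x z' -> e y z' -> z = z'.
Proof.
move=> xy exz eyz exz' eyz'; case: (eqVneq z z') => // zz'; exfalso.
have nxy : ~~ e x y by apply/negP => exy; exact: notri exy eyz exz.
have ezy : e z y by sy.
have hc := cn_card xy nxy exz ezy.
have c2g : 1 < cn 2.
  by rewrite -hc; apply/card_gt1P; exists z, z'; rewrite !inE eyz exz eyz' exz' zz'.
have c2l : cn 2 <= 3.
  rewrite -hc -(ecub y); apply: subset_leq_card; apply/subsetP => w.
  by rewrite !inE => /andP[].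
have [t [ext tz tz']] := nbr_third ecub exz exz' zz'.
have zt : z != t by nsy.
have z't : z' != t by nsy.
have : cn 2 = 2 \/ cn 2 = 3.
  by move: c2g c2l; case: (cn 2) => [|[|[|[|n]]]] //; auto.
case=> h; [exact: cube_case exz exz' ext zz' zt z't h | exact: k33_case exz exz' ext zz' zt z't h].
Qed.

End G.

Theorem lemma5p3 (V : finType) (e : rel V) :
  simple_graph e -> cubic e -> distance_regular e -> 10 <= #|V| ->
  forall (A : CstarAlgebra) (u : V -> V -> A),
    qaut_relations e u ->
    forall i j k l : V,
      gdist e i k = gdist e j l -> gdist e i k <= 2 ->
      ca_mul (u i j) (u k l) = ca_mul (u k l) (u i j).
Proof.
move=> [esym eirr] ecub [conn [_ [bn [cn hbc]]]] n10 A u uR i j k l hd.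
have V3 : 2 < #|V| by apply: leq_trans n10.
have eU := uniq_cn esym eirr ecub conn n10 hbc.
case H: (gdist e i k) hd => [|[|[|n]]] hd // _.
- by rewrite (gd0 V3 H) (gd0 V3 (Logic.eq_sym hd)).
- have eik : e i k by rewrite -(gd1 eirr V3) H.
  have ejl : e j l by rewrite -(gd1 eirr V3) -hd.
  by have -> := adj_comm esym eirr ecub eU uR eik ejl.
- have /and3P[ik _ /existsP [p /andP[eip epk]]] :
    [&& i != k, ~~ e i k & [exists z, e i z && e z k]] by rewrite -gd2 // H.
  have /and3P[jl _ /existsP [q /andP[ejq eql]]] :
    [&& j != l, ~~ e j l & [exists z, e j z && e z l]] by rewrite -gd2 // -hd.
  by have -> := dist2_comm esym eirr ecub eU uR ik eip epk jl ejq eql.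
Qed.
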